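(* Let $p>3$ be a prime, $q=p^h$, and $a,b\in\mathbb{F}_{q^2}^*$. Suppose $f_{a,b}(X)=X(1+aX^{q(q-1)}+bX^{2(q-1)})$ is a permutation polynomial of $\mathbb{F}_{q^2}$ and $\deg\gcd(N_{a,b},D_{a,b})=2$. Then $b=v/a^2$ for some $v\in\mathbb{F}_q^*$ with $v^2-a^{q+1}v-a^{3q+3}=0$ and $-3a^{2q+2}-4v\in\square_q^*$.
   Context: A polynomial $f\in\mathbb{F}_{q^2}[X]$ is a permutation polynomial of $\mathbb{F}_{q^2}$ if $x\mapsto f(x)$ is a bijection of $\mathbb{F}_{q^2}$. $N_{a,b}(X)=a^qX^3+X^2+b^q$ and $D_{a,b}(X)=bX^3+X+a$. $\square_q^*$ denotes the set of nonzero squares of $\mathbb{F}_q$. *)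

(* Defs.v *)
From HB Require Import structures.
From mathcomp Require Import all_boot all_order all_algebra all_field.
Set Implicit Arguments. Unset Strict Implicit. Unset Printing Implicit Defensive.
Import GRing.Theory.
Local Open Scope ring_scope.

(* F plays the role of F_{q^2}; F_q is realised as the subfield {x | x^q = x}. *)
Definition in_Fq (F : finFieldType) (q : nat) (x : F) : bool := x ^+ q == x.

Definition nz_square_Fq (F : finFieldType) (q : nat) (x : F) : Prop :=
  in_Fq q x /\ x != 0 /\ exists w : F, in_Fq q w /\ w ^+ 2 = x.

Definition is_perm_poly (F : finFieldType) (f : {poly F}) : Prop :=
  bijective (fun x : F => f.[x]).

Definition f_ab (F : finFieldType) (q : nat) (a b : F) : {poly F} :=
  'X * (1 + a *: 'X^(q * (q - 1)) + b *: 'X^(2 * (q - 1))).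

Definition N_ab (F : finFieldType) (q : nat) (a b : F) : {poly F} :=
  (a ^+ q) *: 'X^3 + 'X^2 + (b ^+ q)%:P.

Definition D_ab (F : finFieldType) (a b : F) : {poly F} :=
  b *: 'X^3 + 'X + a%:P.

(* Main.v *)
Require Import Defs.
From HB Require Import structures.
From mathcomp Require Import all_boot all_order all_algebra all_field.
From mathcomp Require Import cyclic.
From mathcomp Require Import ring zify.
Import GRing.Theory.
Local Open Scope ring_scope.

Lemma frobD (F : finFieldType) p h q : prime p -> q = (p ^ h)%N -> #|F| = (q ^ 2)%N ->
  forall x y : F, (x + y) ^+ q = x ^+ q + y ^+ q.
Proof.
move=> pp hq hF x y.
have chp : p \in [pchar F].
  by apply: (@card_finPcharP _ p (h * 2)) => //; rewrite hF hq expnM.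
apply: exprDn_pchar.
by rewrite (eq_pnat _ (pcharf_eq chp)) hq pnatX pnat_id.
Qed.

Lemma cnt (F : finFieldType) : size [seq z <- enum F | z != 0] = #|F|.-1.
Proof. rewrite size_filter -(cardC1 (0:F)) cardE /enum_mem size_filter count_filter. apply: eq_count => z. by rewrite !inE andbT. Qed.

Lemma unitpow (F : finFieldType) (x : F) : x != 0 -> x ^+ #|F|.-1 = 1.
Proof.
move=> nz; apply: (mulIf nz); rewrite mul1r -exprSr prednK ?expf_card //.
by apply: ltnW; apply: finNzRing_gt1.
Qed.

Lemma prim_exists (F : finFieldType) : exists g : F, (#|F|.-1).-primitive_root g.
Proof.
have n0 : (0 < #|F|.-1)%N by rewrite -ltnS prednK ?finNzRing_gt1 // ltnW ?finNzRing_gt1.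
have : has (#|F|.-1).-primitive_root [seq z <- enum F | z != 0].
  apply: has_prim_root => //.
- apply/allP => z; rewrite mem_filter => /andP[nz _].
  by rewrite unity_rootE unitpow.
- by rewrite filter_uniq ?enum_uniq.
- by rewrite cnt.
by case/hasP => g _ pg; exists g.
Qed.

Lemma root_pow (F : fieldType) n m k (g x : F) : n.-primitive_root g -> n = (m * k)%N ->
  x ^+ n = 1 -> x ^+ m = 1 -> exists y, y != 0 /\ y ^+ k = x.
Proof.
move=> pg hn xn xm.
have n0 := prim_order_gt0 pg.
have [[i ?] /= hi] := prim_rootP pg xn.
have m0 : (0 < m)%N by move: n0; rewrite hn; case: (m).
have : (n %| i * m)%N by rewrite (prim_order_dvd pg) exprM -hi xm.
rewrite hn [(i * m)%N]mulnC dvdn_pmul2l // => ki.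
exists (g ^+ (i %/ k)); split.
  apply: expf_neq0; apply/eqP => g0; move: (prim_expr_order pg); rewrite g0 expr0n.
  by rewrite eqn0Ngt n0 /= => /eqP; rewrite eq_sym oner_eq0.
by rewrite -exprM divnK.
Qed.

Lemma size_quad (F : fieldType) (b A c : F) : b != 0 ->
  size (b*:'X^2 - A*:'X + c%:P) = 3%N.
Proof.
move=> b0; rewrite -addrA size_polyDl ?size_scale ?size_polyXn //.
apply: (leq_ltn_trans (size_polyD _ _)); rewrite gtn_max size_polyC size_polyN.
by rewrite (leq_ltn_trans (size_scale_leq _ _)) ?size_polyX //; case: (c != 0).
Qed.

Lemma polyid (F : fieldType) (A B a b : F) :
  b*:'X^2 - A*:'X + (b*B - A*a)%:P = b *: (A *: 'X^3 + 'X^2 + B%:P) - A *: (b *: 'X^3 + 'X + a%:P) :> {poly F}.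
Proof. rewrite -!mul_polyC !(polyCM, polyCB). ring. Qed.

Lemma prodid (F : fieldType) (r1 r0 b A c : F) :
  (r1*:'X + r0%:P) * (b*:'X^2 - A*:'X + c%:P) = (r1*b)*:'X^3 + (r0*b - r1*A)*:'X^2 + (r1*c - r0*A)*:'X + (r0*c)%:P :> {poly F}.
Proof. rewrite -!mul_polyC !(polyCM, polyCB). ring. Qed.

Lemma gcd_step (F : finFieldType) (q : nat) (a b : F) : b != 0 ->
  (size (gcdp (N_ab q a b) (D_ab a b))).-1 = 2%N ->
  exists r0, [/\ D_ab a b = ('X + r0%:P) * (b*:'X^2 - a^+q*:'X + (b*b^+q - a^+q*a)%:P),
     r0 * b = a^+q, (b*b^+q - a^+q*a) - r0 * a^+q = 1 & r0 * (b*b^+q - a^+q*a) = a].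
Proof.
move=> b0 hg.
set c := (b*b^+q - a^+q*a).
set R := (b*:'X^2 - a^+q*:'X + c%:P).
have sR : size R = 3%N by apply: size_quad.
have sG : size (gcdp (N_ab q a b) (D_ab a b)) = 3%N.
  by move: hg; case: (size _) => // n /= ->.
have eR : R = b *: N_ab q a b - a^+q *: D_ab a b :> {poly F}.
  exact: polyid.
have GR : gcdp (N_ab q a b) (D_ab a b) %| R.
  by rewrite eR dvdp_sub // -mul_polyC dvdp_mull ?(dvdp_gcdl, dvdp_gcdr).
have RD : R %| D_ab a b.
  have : gcdp (N_ab q a b) (D_ab a b) %= R by rewrite -dvdp_size_eqp // sR sG.
  by move/eqp_dvdl => <-; rewrite dvdp_gcdr.
have sD : size (D_ab a b) = 4%N.
  rewrite /D_ab -addrA size_polyDl ?size_scale ?size_polyXn //.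
  by apply: (leq_ltn_trans (size_polyD _ _)); rewrite gtn_max size_polyC size_polyX; case: (a != 0).
case/dvdpP: RD => r hr.
have R0 : R != 0 by rewrite -size_poly_eq0 sR.
have r0 : r != 0 by apply/eqP => r0; move: sD; rewrite hr r0 mul0r size_poly0.
have sr : size r = 2%N by move: sD; rewrite hr size_mul // sR addn3 /=; case.
have er : r = r`_1 *: 'X + (r`_0)%:P.
  apply/polyP => i; rewrite coefD coefZ coefX coefC.
  case: i => [|[|i]] /=; rewrite ?mulr0 ?mulr1 ?add0r ?addr0 //.
  by rewrite nth_default // sr.
have hD := hr.
move: hr; rewrite {1}er /R prodid => hr.
have h3 := congr1 (fun p : {poly F} => p`_3) hr.
have h2 := congr1 (fun p : {poly F} => p`_2) hr.
have h1 := congr1 (fun p : {poly F} => p`_1) hr.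
have h0 := congr1 (fun p : {poly F} => p`_0) hr.
rewrite /D_ab in h3 h2 h1 h0.
move: h3 h2 h1 h0; rewrite /= !coefE /= !(mulr0, mulr1, addr0, add0r).
move=> h3 h2 h1 h0.
have r1 : r`_1 = 1 by apply: (mulIf b0); rewrite mul1r.
move: h2 h1; rewrite r1 !mul1r => h2 h1.
exists r`_0; split => //.
- by rewrite hD; congr (_ * _); rewrite {1}er r1 scale1r.
- by apply/eqP; rewrite -subr_eq0 -h2.
Qed.

Lemma hnl (q : nat) : (1 < q)%N -> (q ^ 2).-1 = ((q + 1) * (q - 1))%N.
Proof. move=> q1; rewrite -mulnn; case: q q1 => [|n] //= _. rewrite subn1 /=. nia. Qed.
Lemma hnl2 (q : nat) : (1 < q)%N -> (q ^ 2).-1 = ((q - 1) * (q + 1))%N.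
Proof. by move=> q1; rewrite mulnC hnl. Qed.

Theorem mainTheorem5 (F : finFieldType) (p h q : nat) (a b : F) :
  prime p -> (3 < p)%N -> (0 < h)%N -> q = (p ^ h)%N -> #|F| = (q ^ 2)%N ->
  a != 0 -> b != 0 ->
  is_perm_poly (f_ab q a b) ->
  (size (gcdp (N_ab q a b) (D_ab a b))).-1 = 2%N ->
  exists v : F,
    [/\ in_Fq q v, v != 0, b = v / a ^+ 2,
        v ^+ 2 - a ^+ (q + 1) * v - a ^+ (3 * q + 3) = 0 &
        nz_square_Fq q (- 3%:R * a ^+ (2 * q + 2) - 4%:R * v)].
Proof.
move=> pp p3 h0 hq hF a0 b0 PP hg.
have q1 : (1 < q)%N.
  have : (p ^ 1 <= p ^ h)%N by rewrite leq_exp2l // prime_gt1.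
  rewrite -hq expn1; lia.
have qodd : odd q.
  rewrite hq oddX; case: (even_prime pp) => [p2|->]; last by rewrite orbT.
  by move: p3; rewrite p2.
have chp : p \in [pchar F].
  by apply: (@card_finPcharP _ p (h * 2)) => //; rewrite hF hq expnM.
have two : (2%:R : F) != 0.
  apply/eqP => h2.
  have : (2%N \in [pchar F]) by rewrite inE /= h2 eqxx.
  rewrite (pcharf_eq chp) inE => /eqP p2.
  by move: p3; rewrite -p2.
have frD := @frobD F p h q pp hq hF.
have frM (x y : F) : (x * y) ^+ q = x ^+ q * y ^+ q by rewrite exprMn.
have fr2 (x : F) : x ^+ q ^+ q = x by rewrite -exprM mulnn -hF expf_card.
have frN (x : F) : (- x) ^+ q = - x ^+ q.
  by rewrite exprNn -signr_odd qodd expr1 mulN1r.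
have frnat (n : nat) : (n%:R : F) ^+ q = n%:R.
  elim: n => [|n IH]; first by rewrite expr0n gtn_eqF // ltnW.
  by rewrite -addn1 natrD frD IH expr1n.
have frV (x : F) : (x^-1) ^+ q = (x ^+ q)^-1 by rewrite exprVn.
have [r0 [hD h2 h1 h0']] := @gcd_step F q a b b0 hg.
set c := b * b ^+ q - a ^+ q * a.
have A0 : a ^+ q != 0 by rewrite expf_neq0.
have cq : c ^+ q = c.
  rewrite /c frD frN !frM !fr2; ring.
have E1 : c * a ^+ q = a * b by rewrite -h2 mulrCA mulrA h0'.
have E2 : c * a = a ^+ q * b ^+ q.
  by have := congr1 (fun x => x ^+ q) E1; rewrite /= !frM cq fr2.
have hc : c = a * b / a ^+ q by rewrite -E1 mulfK.
pose v := a ^+ 2 * b.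
have v0 : v != 0 by rewrite mulf_neq0 ?expf_neq0.
have vq : v ^+ q = v.
  apply/eqP; rewrite -subr_eq0 /v frM exprAC.
  have -> : (a ^+ q) ^+ 2 * b ^+ q - a ^+ 2 * b =
     a ^+ q * (a ^+ q * b ^+ q - c * a) + a * (c * a ^+ q - a * b) by ring.
  by rewrite E1 E2 !subrr !mulr0 addr0.
have hb : b = v / a ^+ 2 by rewrite /v mulrAC divff ?mul1r // expf_neq0.
pose u := a ^+ q * a.
have u0 : u != 0 by rewrite mulf_neq0.
have uq : u ^+ q = u by rewrite /u frM fr2 mulrC.
have e1 : a ^+ (q + 1) = u by rewrite exprD expr1.
have e3 : a ^+ (3 * q + 3) = u ^+ 3 by rewrite exprD mulnC exprM /u exprMn.
have e2 : a ^+ (2 * q + 2) = u ^+ 2 by rewrite exprD mulnC exprM /u exprMn.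
have Ev : v ^+ 2 - u * v - u ^+ 3 = 0.
  have -> : v ^+ 2 - u * v - u ^+ 3 = a ^+ 3 * (b * (a * b - c * a ^+ q)
     + a ^+ q * b * ((c - r0 * a ^+ q) - 1) + (a ^+ q) ^+ 2 * (r0 * b - a ^+ q)).
    rewrite /v /u; ring.
  by rewrite E1 h1 h2 !subrr !mulr0 !addr0 mulr0.
exists v; split => //.
- by apply/eqP.
- by rewrite e1 e3.
rewrite e2.
set w := - 3%:R * u ^+ 2 - 4%:R * v.
have wq : w ^+ q = w by rewrite /w frD frN (frM _ (u ^+ 2)) frN frnat (frM _ v) frnat vq exprAC uq.
pose t := u ^+ 2 / v.
have four : (4%:R : F) != 0.
  have -> : (4%:R : F) = 2%:R * 2%:R by rewrite -natrM.
  by rewrite mulf_neq0.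
have tq : t ^+ q = t by rewrite /t frM frV exprAC uq vq.
have K : t ^+ 2 - 4%:R * u = (u / v) ^+ 2 * w.
  apply/eqP; rewrite -subr_eq0.
  have -> : t ^+ 2 - 4%:R * u - (u / v) ^+ 2 * w =
     (- 4%:R * u / v ^+ 2) * (v ^+ 2 - u * v - u ^+ 3).
    by rewrite /t /w; field.
  by rewrite Ev mulr0.
have noroot (x : F) : x != 0 -> x ^+ q * x = 1 -> (D_ab a b).[x] = 0 -> False.
  move=> x0 hx hDx.
  have [g pg] := prim_exists F.
  have hn : #|F|.-1 = ((q + 1) * (q - 1))%N by rewrite hF hnl.
  have [y [y0 hy]] : exists y, y != 0 /\ y ^+ (q - 1) = x.
    apply: (@root_pow _ _ _ _ g x pg hn). exact: unitpow. by rewrite exprD expr1.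
  have inj := bij_inj PP.
  have : (f_ab q a b).[y] = (f_ab q a b).[0].
    rewrite /f_ab !hornerE.
    rewrite [(q * (q - 1))%N]mulnC [(2 * (q - 1))%N]mulnC !exprM hy.
    have -> : 1 + a * x ^+ q + b * x ^+ 2 =
       x ^+ q * (b * x ^+ 3 + x + a) + (1 - x ^+ q * x) * (1 + b * x ^+ 2) by ring.
    move: hDx; rewrite /D_ab !hornerE => ->.
    by rewrite hx subrr !(mulr0, mul0r, addr0, add0r).
  by move/inj => y00; move: y0; rewrite y00 eqxx.
have fromS (s : F) : s ^+ 2 = w :> F -> s ^+ q = - s -> False.
  move=> hs hsq.
  pose Y := (t + (u / v) * s) / 2%:R.
  have Yq : Y ^+ q = (t - (u / v) * s) / 2%:R.
    by rewrite /Y frM (frV 2%:R) frnat frD frM frM (frV v) uq vq tq hsq mulrN.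
  have hY : Y ^+ 2 - t * Y + u = 0.
    have -> : Y ^+ 2 - t * Y + u = ((u / v) ^+ 2 * s ^+ 2 - (t ^+ 2 - 4%:R * u)) / 4%:R.
      by rewrite /Y; field; rewrite four v0 two.
    by rewrite hs K subrr mul0r.
  have hYY : Y ^+ q * Y = u.
    have -> : Y ^+ q * Y = (t ^+ 2 - (u / v) ^+ 2 * s ^+ 2) / 4%:R.
      by rewrite Yq /Y; field; rewrite four v0 two.
    by rewrite hs -K; field; rewrite four.
  have Y0 : Y != 0.
    by apply/eqP => Y0; move: hYY; rewrite Y0 mulr0 => /esym/eqP; rewrite (negbTE u0).
  apply: (noroot (Y / a ^+ q)).
  - by rewrite mulf_neq0 ?invr_eq0.
  - rewrite frM frV fr2.
    have -> : Y ^+ q / a * (Y / a ^+ q) = (Y ^+ q * Y) / u.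
      by rewrite /u; field; rewrite a0 A0.
    apply: (etrans (congr1 (fun z => z / u) hYY)); exact: divff u0.
  rewrite hD hornerM; apply/eqP; rewrite mulf_eq0; apply/orP; right; apply/eqP.
  rewrite !(hornerD, hornerN, hornerZ, hornerXn, hornerX, hornerC).
  have -> : b * (Y / a ^+ q) ^+ 2 - a ^+ q * (Y / a ^+ q) + c =
     (b / (a ^+ q) ^+ 2) * (Y ^+ 2 - t * Y + u).
    by rewrite hc /t /u /v; field; rewrite b0 a0 A0.
  apply: (etrans (congr1 (fun z => b / a ^+ q ^+ 2 * z) hY)); exact: mulr0.
split; first by apply/eqP.
have w0 : w != 0.
  apply/eqP => w0; apply: (fromS 0); first by rewrite w0 expr2 mulr0.
  by rewrite oppr0 expr0n gtn_eqF // ltnW.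
split => //.
have [s hs] : exists s : F, s ^+ 2 = w :> F.
  have [g pg] := prim_exists F.
  have hn : #|F|.-1 = ((q - 1) * (q + 1))%N by rewrite hF hnl2.
  have w1 : w ^+ (q - 1) = 1 :> F.
    by apply: (mulIf w0); rewrite mul1r -exprSr subn1 prednK ?wq // ltnW.
  have [y [_ hy]] : exists y : F, y != 0 /\ y ^+ (q + 1) = w :> F.
    exact: (@root_pow _ _ _ _ g w pg hn (unitpow _ _ w0) w1).
  exists (y ^+ ((q + 1) %/ 2)); rewrite -exprM divnK ?hy // dvdn2 addn1 /= qodd.
  by [].
case: (eqVneq (s ^+ q) s) => [sq|sq].
  by exists s; split => //; apply/eqP.
have : (s ^+ q) ^+ 2 = s ^+ 2 by rewrite exprAC hs wq.
move/eqP; rewrite -subr_eq0 subr_sqr mulf_eq0 subr_eq0 (negbTE sq) /= addr_eq0.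
by move/eqP => hsq; exfalso; apply: (fromS s hs hsq).
Qed.
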